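(* Let $(\mathfrak{g},[\cdot,\cdot]_{\mathfrak{g}})$ be a Leibniz algebra over a field $\mathbf{K}$, $(V;\rho^L,\rho^R)$ a representation, $T:V\to\mathfrak{g}$ a relative Rota-Baxter operator, and $T_t=\sum_{i=0}^n\mathfrak{T}_it^i$ an order $n$ deformation of $T$. Define $\mathrm{Ob}_T\in C^2(V,\mathfrak{g})$ by $\mathrm{Ob}_T(u,v)=\sum_{i+j=n+1,\ i,j\ge1}\big([\mathfrak{T}_iu,\mathfrak{T}_jv]_{\mathfrak{g}}-\mathfrak{T}_i(\rho^L(\mathfrak{T}_ju)v+\rho^R(\mathfrak{T}_jv)u)\big)$. Then $\partial_T\mathrm{Ob}_T=0$, i.e. $\mathrm{Ob}_T$ is a 2-cocycle.
   Context: A Leibniz algebra is a vector space $\mathfrak{g}$ with bilinear $[\cdot,\cdot]_{\mathfrak{g}}$ satisfying $[x,[y,z]_{\mathfrak{g}}]_{\mathfrak{g}}=[[x,y]_{\mathfrak{g}},z]_{\mathfrak{g}}+[y,[x,z]_{\mathfrak{g}}]_{\mathfrak{g}}$. A representation $(V;\rho^L,\rho^R)$: linear $\rho^L,\rho^R:\mathfrak{g}\to\mathfrak{gl}(V)$ with $\rho^L([x,y]_{\mathfrak{g}})=[\rho^L(x),\rho^L(y)]$, $\rho^R([x,y]_{\mathfrak{g}})=[\rho^L(x),\rho^R(y)]$, $\rho^R(y)\rho^L(x)=-\rho^R(y)\rho^R(x)$. A relative Rota-Baxter operator is a linear $T:V\to\mathfrak{g}$ with $[Tv_1,Tv_2]_{\mathfrak{g}}=T(\rho^L(Tv_1)v_2+\rho^R(Tv_2)v_1)$.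 $C^k(V,\mathfrak{g})=\mathrm{Hom}(\otimes^kV,\mathfrak{g})$ and $\partial_T:C^k\to C^{k+1}$ is $(\partial_Tf)(v_1,\dots,v_{k+1})=\sum_{i=1}^k(-1)^{i+1}[Tv_i,f(v_1,\dots,\hat v_i,\dots,v_{k+1})]_{\mathfrak{g}}-\sum_{i=1}^k(-1)^{i+1}T\rho^R(f(v_1,\dots,\hat v_i,\dots,v_{k+1}))v_i+(-1)^{k+1}[f(v_1,\dots,v_k),Tv_{k+1}]_{\mathfrak{g}}+(-1)^kT\rho^L(f(v_1,\dots,v_k))v_{k+1}+\sum_{1\le i<j\le k+1}(-1)^if(v_1,\dots,\hat v_i,\dots,v_{j-1},\rho^L(Tv_i)v_j+\rho^R(Tv_j)v_i,v_{j+1},\dots,v_{k+1})$. An order $n$ deformation of $T$ is $T_t=\sum_{i=0}^n\mathfrak{T}_it^i$ with $\mathfrak{T}_0=T$, $\mathfrak{T}_i\in\mathrm{Hom}(V,\mathfrak{g})$, viewed as a $\mathbf{K}[t]/(t^{n+1})$-module map $V[t]/(t^{n+1})\to\mathfrak{g}[t]/(t^{n+1})$ (bracket and $\rho^L,\rho^R$ extended $\mathbf{K}[t]/(t^{n+1})$-bilinearly), such that $[T_t(u),T_t(v)]_{\mathfrak{g}}=T_t(\rho^L(T_t(u))v+\rho^R(T_t(v))u)$ for all $u,v\in V$; equivalently $\sum_{k+l=i,\,k,l\ge0}\big([\mathfrak{T}_ku,\mathfrak{T}_lv]_{\mathfrak{g}}-\mathfrak{T}_k(\rho^L(\mathfrak{T}_lu)v+\rho^R(\mathfrak{T}_lv)u)\big)=0$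 for $0\le i\le n$. *)

(* Defs.v *)
From HB Require Import structures.
From mathcomp Require Import all_boot all_order all_algebra.
Set Implicit Arguments. Unset Strict Implicit. Unset Printing Implicit Defensive.
Import GRing.Theory.
Local Open Scope ring_scope.

Section LeibnizDefs.
Variables (K : fieldType) (g V : lmodType K).

Definition is_leibniz (br : g -> g -> g) : Prop :=
  [/\ forall x, linear (br x), forall y, linear (fun x => br x y) &
      forall x y z, br x (br y z) = br (br x y) z + br y (br x z)].

Definition is_representation (br : g -> g -> g) (rhoL rhoR : g -> V -> V) : Prop :=
  [/\ (forall v, linear (fun x => rhoL x v)), (forall v, linear (fun x => rhoR x v)),
      (forall x, linear (rhoL x)) & (forall x, linear (rhoR x))] /\
  [/\ (forall x y v, rhoL (br x y) v = rhoL x (rhoL y v) - rhoL y (rhoL x v)),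
      (forall x y v, rhoR (br x y) v = rhoL x (rhoR y v) - rhoR y (rhoL x v)) &
      (forall x y v, rhoR y (rhoL x v) = - rhoR y (rhoR x v))].

Definition is_relRB (br : g -> g -> g) (rhoL rhoR : g -> V -> V) (T : V -> g) : Prop :=
  linear T /\
  forall v1 v2, br (T v1) (T v2) = T (rhoL (T v1) v2 + rhoR (T v2) v1).

(* Order n deformation T_t = sum_{i=0}^n Ts i t^i of T. *)
Definition is_order_deformation (br : g -> g -> g) (rhoL rhoR : g -> V -> V)
    (T : V -> g) (n : nat) (Ts : nat -> V -> g) : Prop :=
  [/\ Ts 0%N = T, (forall i, (i <= n)%N -> linear (Ts i)) &
      forall i, (i <= n)%N -> forall u v,
        \sum_(k < i.+1) (br (Ts k u) (Ts (i - k)%N v)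
            - Ts k (rhoL (Ts (i - k)%N u) v + rhoR (Ts (i - k)%N v) u)) = 0].

Definition obstruction (br : g -> g -> g) (rhoL rhoR : g -> V -> V)
    (n : nat) (Ts : nat -> V -> g) (u v : V) : g :=
  \sum_(1 <= i < n.+1) (br (Ts i u) (Ts (n.+1 - i)%N v)
      - Ts i (rhoL (Ts (n.+1 - i)%N u) v + rhoR (Ts (n.+1 - i)%N v) u)).

(* A k-cochain in C^k(V,g) is represented as a function of a list of arguments
   (only lists of length k matter).  Indices below are 0-based. *)
Definition drop_at (i : nat) (s : seq V) : seq V := take i s ++ drop i.+1 s.

Definition coboundary (br : g -> g -> g) (rhoL rhoR : g -> V -> V) (T : V -> g)
    (k : nat) (f : seq V -> g) (s : seq V) : g :=
  let v i := nth 0 s i in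
  \sum_(i < k) (-1) ^+ i *: br (T (v i)) (f (drop_at i s))
  - \sum_(i < k) (-1) ^+ i *: T (rhoR (f (drop_at i s)) (v i))
  + (-1) ^+ k.+1 *: br (f (take k s)) (T (v k))
  + (-1) ^+ k *: T (rhoL (f (take k s)) (v k))
  + \sum_(j < k.+1) \sum_(i < j)
      (-1) ^+ i.+1 *: f (drop_at i (set_nth 0 s j
                          (rhoL (T (v i)) (v j) + rhoR (T (v j)) (v i)))).

End LeibnizDefs.

(* Main.v *)
Require Import Defs.
From HB Require Import structures.
From mathcomp Require Import all_boot all_order all_algebra ring zify.
Set Implicit Arguments. Unset Strict Implicit. Unset Printing Implicit Defensive.
Import GRing.Theory.
Local Open Scope ring_scope.

Section TE.
Variable M : zmodType.
Definition TE := (int * M)%type.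
HB.instance Definition _ := GRing.Zmodule.on TE.
Definition te_one : TE := (1, 0).
Definition te_mul (x y : TE) : TE := (x.1 * y.1, x.2 *~ y.1 + y.2 *~ x.1).
Lemma te_mulA : associative te_mul.
Proof. move=> [a x] [b y] [c z]; rewrite /te_mul /=; congr (_, _); first by rewrite mulrA.
by rewrite !mulrzDl -!mulrzA !addrA [b * c]mulrC [a * c]mulrC [a*b]mulrC. Qed.
Lemma te_mulC : commutative te_mul.
Proof. by move=> [a x] [b y]; rewrite /te_mul /= mulrC addrC. Qed.
Lemma te_mul1 : left_id te_one te_mul.
Proof. by move=> [a x]; rewrite /te_mul /= mul1r mul0rz add0r. Qed.
Lemma te_mulDl : left_distributive te_mul +%R.
Proof. move=> [a x] [b y] [c z]; rewrite /te_mul /=; congr (_, _); first by rewrite mulrDl.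
rewrite mulrzDl mulrzDr. rewrite -!addrA; congr (_ + _). by rewrite addrCA. Qed.
Lemma te_one_neq0 : te_one != 0.
Proof. by []. Qed.
HB.instance Definition _ := GRing.Zmodule_isComNzRing.Build TE te_mulA te_mulC te_mul1 te_mulDl te_one_neq0.
Definition inj (x : M) : TE := (0, x).
Lemma injD x y : inj (x + y) = inj x + inj y. Proof. by []. Qed.
Lemma injN x : inj (- x) = - inj x. Proof. by []. Qed.
Lemma inj0 : inj 0 = 0. Proof. by []. Qed.
Lemma inj_inj x y : inj x = inj y -> x = y. Proof. by case. Qed.
End TE.

Ltac zmod_ring := apply: inj_inj; rewrite ?(injD, injN, inj0); ring.

Section Lin.
Variables (K : fieldType) (U W : lmodType K) (f : U -> W).
Hypothesis hf : linear f.
Lemma lin0 : f 0 = 0.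
Proof. have h := hf 1 0 0; rewrite !scale1r !addr0 in h.
by apply: (addrI (f 0)); rewrite addr0 -h. Qed.
Lemma linD x y : f (x + y) = f x + f y.
Proof. by have h := hf 1 x y; rewrite !scale1r in h. Qed.
Lemma linN x : f (- x) = - f x.
Proof. by have h := hf (-1) x 0; rewrite !addr0 lin0 addr0 !scaleN1r in h. Qed.
End Lin.

Section S3.
Variables (R : zmodType) (M N : nat).
Definition S3 (F : nat -> nat -> nat -> R) :=
  \sum_(a < M) \sum_(b < M) \sum_(c < M) (if (a + b + c == N)%N then F a b c else 0).

Lemma S3_ext F G : (forall a b c, (a < M)%N -> (b < M)%N -> (c < M)%N -> F a b c = G a b c) ->
  S3 F = S3 G.
Proof.
move=> h; apply: eq_bigr => a _; apply: eq_bigr => b _; apply: eq_bigr => c _.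
by rewrite h.
Qed.

Lemma S3_add F G : S3 (fun a b c => F a b c + G a b c) = S3 F + S3 G.
Proof.
rewrite /S3 -big_split; apply: eq_bigr => a _; rewrite -big_split; apply: eq_bigr => b _.
rewrite -big_split; apply: eq_bigr => c _. case: (_ == _) => /=; by rewrite ?addr0.
Qed.

Lemma S3_0 : S3 (fun _ _ _ => 0) = 0.
Proof.
rewrite /S3; apply: big1 => a _; apply: big1 => b _; apply: big1 => c _; by rewrite if_same.
Qed.

Lemma S3_12 F : S3 (fun a b c => F b a c) = S3 F.
Proof.
rewrite /S3 exchange_big; apply: eq_bigr => a _; apply: eq_bigr => b _; apply: eq_bigr => c _.
by rewrite (addnC b a).
Qed.

Lemma S3_23 F : S3 (fun a b c => F a c b) = S3 F.
Proof.
rewrite /S3; apply: eq_bigr => a _; rewrite exchange_big; apply: eq_bigr => b _; apply: eq_bigr => c _.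
by rewrite -addnA (addnC c b) addnA.
Qed.

Lemma S3_cab F : S3 (fun a b c => F c a b) = S3 F.
Proof.
by rewrite (S3_23 (fun a b c => F b a c)) S3_12.
Qed.

Lemma S3_13 F : S3 (fun a b c => F c b a) = S3 F.
Proof.
by rewrite (S3_23 (fun a b c => F b c a)) (S3_12 (fun a b c => F a c b)) S3_23.
Qed.
End S3.

Section Inner.
Variable R : zmodType.

Lemma dirac M (F : nat -> R) j :
  \sum_(c < M) (if (c == j :> nat) then F c else 0) = if (j < M)%N then F j else 0.
Proof.
elim: M => [|M IH]; first by rewrite big_ord0.
rewrite big_ord_recr /= IH.
case: (ltngtP j M) => h.
- have -> : (j < M.+1)%N by lia.
  by rewrite addr0.
- have -> : (j < M.+1)%N = false by lia.
  by rewrite addr0.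
- by subst j; rewrite ltnSn add0r.
Qed.

Lemma inner M N k (F : nat -> R) :
  \sum_(c < M) (if (k + c == N)%N then F c else 0) =
  if (k <= N)%N && (N - k < M)%N then F (N - k)%N else 0.
Proof.
case: (leqP k N) => h /=.
- rewrite -dirac; apply: eq_bigr => c _.
  have -> : (k + c == N)%N = ((c : nat) == N - k)%N by apply/eqP/eqP; lia.
  by [].
- apply: big1 => c _.
  have -> : (k + c == N)%N = false by apply/eqP; lia.
  by [].
Qed.

Lemma G0 n (P : nat -> nat -> R) :
  \sum_(b < n.+1) \sum_(c < n.+1) (if (0 + b + c == n.+1)%N then P b c else 0) =
  \sum_(1 <= i < n.+1) P i (n.+1 - i)%N.
Proof.
under eq_bigr => b _ do rewrite inner.
rewrite big_ord_recl.
case: ifP => [/andP [_ hc] | _]; first by exfalso; move: hc => /=; lia.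
rewrite add0r big_add1 /= big_mkord; apply: eq_bigr => i _.
rewrite (_ : bump 0 i = i.+1) // add0n.
have -> : (i.+1 <= n.+1)%N && (n.+1 - i.+1 < n.+1)%N by have := ltn_ord i; move=> hi; apply/andP; split; lia.
by [].
Qed.

Lemma Gpos n a (P : nat -> nat -> R) : (0 < a)%N -> (a < n.+1)%N ->
  \sum_(b < n.+1) \sum_(c < n.+1) (if (a + b + c == n.+1)%N then P b c else 0) =
  \sum_(b < (n.+1 - a)%N.+1) P b (n.+1 - a - b)%N.
Proof.
move=> ha han.
under eq_bigr => b _ do rewrite inner.
have hle : ((n.+1 - a).+1 <= n.+1)%N by lia.
rewrite (big_ord_widen _ (fun b => P b (n.+1 - a - b)%N) hle) [RHS]big_mkcond /=.
apply: eq_bigr => b _.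
have -> : (a + b <= n.+1)%N && (n.+1 - (a + b) < n.+1)%N = (b < (n.+1 - a).+1)%N.
  by apply/idP/idP; [move/andP => [h1 h2]; lia | move=> h; apply/andP; split; lia].
by case: ifP => // _; rewrite subnDA.
Qed.
End Inner.

Section Main.
Variables (K : fieldType) (g V : lmodType K) (br : g -> g -> g) (rhoL rhoR : g -> V -> V).
Hypothesis brD1 : forall a b y, br (a + b) y = br a y + br b y.
Hypothesis brN1 : forall a y, br (- a) y = - br a y.
Hypothesis brD2 : forall x a b, br x (a + b) = br x a + br x b.
Hypothesis brN2 : forall x a, br x (- a) = - br x a.
Hypothesis rLD1 : forall a b y, rhoL (a + b) y = rhoL a y + rhoL b y.
Hypothesis rLN1 : forall a y, rhoL (- a) y = - rhoL a y.
Hypothesis rLD2 : forall x a b, rhoL x (a + b) = rhoL x a + rhoL x b.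
Hypothesis rLN2 : forall x a, rhoL x (- a) = - rhoL x a.
Hypothesis rRD1 : forall a b y, rhoR (a + b) y = rhoR a y + rhoR b y.
Hypothesis rRN1 : forall a y, rhoR (- a) y = - rhoR a y.
Hypothesis rRD2 : forall x a b, rhoR x (a + b) = rhoR x a + rhoR x b.
Hypothesis rRN2 : forall x a, rhoR x (- a) = - rhoR x a.
Hypothesis leib : forall x y z, br x (br y z) = br (br x y) z + br y (br x z).
Hypothesis repL : forall x y v, rhoL (br x y) v = rhoL x (rhoL y v) - rhoL y (rhoL x v).
Hypothesis repR : forall x y v, rhoR (br x y) v = rhoL x (rhoR y v) - rhoR y (rhoL x v).
Hypothesis rep3 : forall x y v, rhoR y (rhoL x v) = - rhoR y (rhoR x v).

Definition addi (X : V -> g) := (forall a b, X (a + b) = X a + X b) /\ (forall a, X (- a) = - X a).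

Definition circ (X : V -> g) u v := rhoL (X u) v + rhoR (X v) u.
Definition Phi (X Y : V -> g) u v := br (X u) (Y v) - X (circ Y u v).
Definition dd (X : V -> g) (f : V -> V -> g) u v w :=
  br (X u) (f v w) - X (rhoR (f v w) u)
  - br (X v) (f u w) + X (rhoR (f u w) v)
  - br (f u v) (X w) + X (rhoL (f u v) w)
  - f (circ X u v) w - f v (circ X u w) + f u (circ X v w).

Section Pieces.
Variables (u v w : V).
Definition E12 (X Y Z : V -> g) :=
  br (X u) (br (Y v) (Z w)) + Y (rhoL (Z v) (rhoL (X u) w)) + Y (rhoR (Z w) (rhoL (X u) v))
  + Y (rhoR (Z w) (rhoR (X v) u)).
Definition E13 (X Y Z : V -> g) :=
  - br (br (Y u) (Z v)) (X w) - br (Y (circ X u v)) (Z w).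
Definition Ecab (X Y Z : V -> g) :=
  br (Y u) (Z (circ X v w)) - br (Y v) (Z (circ X u w)) + Y (rhoR (Z (circ X u w)) v)
  + Y (rhoL (Z v) (rhoR (X w) u)) + Y (rhoL (Z (circ X u v)) w) - Y (circ Z u (circ X v w)).
Definition Eid (X Y Z : V -> g) :=
  - br (X u) (Y (circ Z v w)) - br (X v) (br (Y u) (Z w)) + br (X v) (Y (circ Z u w))
  + br (Y (circ Z u v)) (X w) - X (rhoR (br (Y v) (Z w)) u) + X (rhoR (Y (circ Z v w)) u)
  + X (rhoR (br (Y u) (Z w)) v) - X (rhoR (Y (circ Z u w)) v) + X (rhoL (br (Y u) (Z v)) w)
  - X (rhoL (Y (circ Z u v)) w).

Lemma split_dd X Y Z : addi X -> addi Y -> addi Z ->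
  dd X (Phi Y Z) u v w = Eid X Y Z + E12 X Y Z + E13 X Y Z + Ecab X Y Z.
Proof.
move=> [XD XN] [YD YN] [ZD ZN].
rewrite /dd /Phi /Eid /E12 /E13 /Ecab /circ.
rewrite !(brD1, brN1, brD2, brN2, rLD1, rLN1, rLD2, rLN2, rRD1, rRN1, rRD2, rRN2, XD, XN, YD, YN, ZD, ZN).
zmod_ring.
Qed.

Lemma cancel_E X Y Z : addi X -> addi Y -> addi Z ->
  Eid X Y Z + E12 Y X Z + E13 Z Y X + Ecab Z X Y = 0.
Proof.
move=> [XD XN] [YD YN] [ZD ZN].
rewrite /Eid /E12 /E13 /Ecab.
rewrite (leib (Y u) (X v) (Z w)).
rewrite /circ.
rewrite !(brD1, brN1, brD2, brN2, rLD1, rLN1, rLD2, rLN2, rRD1, rRN1, rRD2, rRN2, XD, XN, YD, YN, ZD, ZN).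
rewrite !(repL, repR).
rewrite !(brD1, brN1, brD2, brN2, rLD1, rLN1, rLD2, rLN2, rRD1, rRN1, rRD2, rRN2, XD, XN, YD, YN, ZD, ZN).
rewrite !rep3.
rewrite !(brD1, brN1, brD2, brN2, rLD1, rLN1, rLD2, rLN2, rRD1, rRN1, rRD2, rRN2, XD, XN, YD, YN, ZD, ZN).
zmod_ring.
Qed.
End Pieces.

Lemma add0f (A B : zmodType) (f : A -> B) : (forall a b, f (a + b) = f a + f b) -> f 0 = 0.
Proof. by move=> h; apply: (addrI (f 0)); rewrite -h !addr0. Qed.

Lemma S3_dd (M N : nat) (Ts : nat -> V -> g) u v w :
  (forall i, (i < M)%N -> addi (Ts i)) ->
  S3 M N (fun a b c => dd (Ts a) (Phi (Ts b) (Ts c)) u v w) = 0.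
Proof.
move=> hT.
rewrite (@S3_ext _ M N _ (fun a b c => Eid u v w (Ts a) (Ts b) (Ts c) + E12 u v w (Ts a) (Ts b) (Ts c)
   + E13 u v w (Ts a) (Ts b) (Ts c) + Ecab u v w (Ts a) (Ts b) (Ts c))); last first.
  by move=> a b c ha hb hc; rewrite split_dd; auto.
rewrite (S3_add M N (fun a b c => Eid u v w (Ts a) (Ts b) (Ts c) + E12 u v w (Ts a) (Ts b) (Ts c) + E13 u v w (Ts a) (Ts b) (Ts c)) (fun a b c => Ecab u v w (Ts a) (Ts b) (Ts c))).
rewrite (S3_add M N (fun a b c => Eid u v w (Ts a) (Ts b) (Ts c) + E12 u v w (Ts a) (Ts b) (Ts c)) (fun a b c => E13 u v w (Ts a) (Ts b) (Ts c))).
rewrite (S3_add M N (fun a b c => Eid u v w (Ts a) (Ts b) (Ts c)) (fun a b c => E12 u v w (Ts a) (Ts b) (Ts c))).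
rewrite -(S3_12 M N (fun a b c => E12 u v w (Ts a) (Ts b) (Ts c))).
rewrite -(S3_13 M N (fun a b c => E13 u v w (Ts a) (Ts b) (Ts c))).
rewrite -(S3_cab M N (fun a b c => Ecab u v w (Ts a) (Ts b) (Ts c))).
rewrite -!S3_add.
rewrite (@S3_ext _ M N _ (fun _ _ _ => 0)) ?S3_0 // => a b c ha hb hc.
by apply: cancel_E; auto.
Qed.

Lemma dd_ext X f f' u v w : (forall x y, f x y = f' x y) -> dd X f u v w = dd X f' u v w.
Proof. by move=> h; rewrite /dd !h. Qed.

Lemma dd_add X f1 f2 u v w : addi X ->
  dd X (fun x y => f1 x y + f2 x y) u v w = dd X f1 u v w + dd X f2 u v w.
Proof.
move=> [XD XN]; rewrite /dd !(brD1, brD2, rRD1, rLD1, XD).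
zmod_ring.
Qed.

Lemma dd_0 X u v w : addi X -> dd X (fun _ _ => 0) u v w = 0.
Proof.
move=> [XD XN]; rewrite /dd.
have h1 : forall x, br x 0 = 0 by move=> x; apply: add0f; apply: brD2.
have h2 : forall x, br 0 x = 0 by move=> x; apply: (add0f (f := fun a => br a x)) => a b; apply: brD1.
have h3 : forall x, rhoR 0 x = 0 by move=> x; apply: (add0f (f := fun a => rhoR a x)) => a b; apply: rRD1.
have h4 : forall x, rhoL 0 x = 0 by move=> x; apply: (add0f (f := fun a => rhoL a x)) => a b; apply: rLD1.
have h5 : X 0 = 0 by apply: add0f.
rewrite !(h1, h2, h3, h4, h5).
zmod_ring.
Qed.

Lemma dd_sum X (F : nat -> V -> V -> g) m u v w : addi X ->
  dd X (fun x y => \sum_(i < m) F i x y) u v w = \sum_(i < m) dd X (F i) u v w.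
Proof.
move=> hX; elim: m => [|m IH].
  by rewrite big_ord0 (@dd_ext X _ (fun _ _ => 0)) ?dd_0 // => x y; rewrite big_ord0.
rewrite big_ord_recr /= -IH -dd_add //.
by apply: dd_ext => x y; rewrite big_ord_recr.
Qed.

Lemma dd_if X (P : bool) f u v w : addi X ->
  dd X (fun x y => if P then f x y else 0) u v w = if P then dd X f u v w else 0.
Proof.
by move=> hX; case: P; [apply: dd_ext | apply: dd_0].
Qed.

Lemma S3_dd_split (M N : nat) (Ts : nat -> V -> g) u v w :
  (forall i, (i < M)%N -> addi (Ts i)) ->
  S3 M N (fun a b c => dd (Ts a) (Phi (Ts b) (Ts c)) u v w) =
  \sum_(a < M) dd (Ts a) (fun x y => \sum_(b < M) \sum_(c < M)
      (if (a + b + c == N)%N then Phi (Ts b) (Ts c) x y else 0)) u v w.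
Proof.
move=> hT; apply: eq_bigr => a _.
rewrite (@dd_sum (Ts a) (fun (b : nat) x y => \sum_(c < M) (if (a + b + c == N)%N then Phi (Ts b) (Ts c) x y else 0)) M u v w); last exact: hT.
apply: eq_bigr => b _; rewrite (@dd_sum (Ts a) (fun (c : nat) x y => if (a + b + c == N)%N then Phi (Ts b) (Ts c) x y else 0) M u v w); last exact: hT.
apply: eq_bigr => c _; rewrite dd_if //; exact: hT.
Qed.

Lemma cob (T : V -> g) (f : V -> V -> g) u v w :
  coboundary br rhoL rhoR T 2 (fun s => f (nth 0 s 0) (nth 0 s 1)) [:: u; v; w] = dd T f u v w.
Proof.
rewrite /coboundary /drop_at /dd /circ /=.
rewrite !big_ord_recr !big_ord0 /=.
rewrite (exprS _ 2) !expr0 !expr1 !sqrrN !expr1n mulr1 !scale1r !scaleN1r.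
zmod_ring.
Qed.

Lemma main_sec (T : V -> g) (n : nat) (Ts : nat -> V -> g) :
  Ts 0%N = T -> (forall i, (i < n.+1)%N -> addi (Ts i)) ->
  (forall i, (i <= n)%N -> forall u v,
        \sum_(k < i.+1) (br (Ts k u) (Ts (i - k)%N v)
            - Ts k (rhoL (Ts (i - k)%N u) v + rhoR (Ts (i - k)%N v) u)) = 0) ->
  forall u v w : V,
    coboundary br rhoL rhoR T 2
      (fun s => obstruction br rhoL rhoR n Ts (nth 0 s 0) (nth 0 s 1))
      [:: u; v; w] = 0.
Proof.
move=> hT0 hT hdef u v w.
rewrite cob -hT0.
have E := @S3_dd n.+1 n.+1 Ts u v w hT.
rewrite S3_dd_split // big_ord_recl in E.
rewrite big1 ?addr0 in E; last first.
  move=> i _.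
  rewrite (@dd_ext _ _ (fun _ _ => 0)) ?dd_0 //; first exact: hT.
  move=> x y.
  have hi := ltn_ord i.
  rewrite (@Gpos _ n (lift ord0 i) (fun b c => Phi (Ts b) (Ts c) x y)); last by rewrite lift0.
    apply: hdef; rewrite lift0; lia.
  by rewrite lift0.
rewrite -E; apply: dd_ext => x y.
rewrite (@G0 _ n (fun b c => Phi (Ts b) (Ts c) x y)).
by [].
Qed.
End Main.

Theorem proposition3p24 (K : fieldType) (g V : lmodType K)
    (br : g -> g -> g) (rhoL rhoR : g -> V -> V) (T : V -> g)
    (n : nat) (Ts : nat -> V -> g) :
  is_leibniz br ->
  is_representation br rhoL rhoR ->
  is_relRB br rhoL rhoR T ->
  is_order_deformation br rhoL rhoR T n Ts ->
  forall u v w : V,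
    coboundary br rhoL rhoR T 2
      (fun s => obstruction br rhoL rhoR n Ts (nth 0 s 0) (nth 0 s 1))
      [:: u; v; w] = 0.
Proof.
move=> [hbr hbl hleib] [[hLv hRv hLx hRx] [repL repR rep3]] [hTlin hRB] [hT0 hTs hdef].
have brD1 : forall a b y, br (a + b) y = br a y + br b y by move=> a b y; exact: (linD (hbl y)).
have brN1 : forall a y, br (- a) y = - br a y by move=> a y; exact: (linN (hbl y)).
have brD2 : forall x a b, br x (a + b) = br x a + br x b by move=> x a b; exact: (linD (hbr x)).
have brN2 : forall x a, br x (- a) = - br x a by move=> x a; exact: (linN (hbr x)).
have rLD1 : forall a b y, rhoL (a + b) y = rhoL a y + rhoL b y by move=> a b y; exact: (linD (hLv y)).
have rLN1 : forall a y, rhoL (- a) y = - rhoL a y by move=> a y; exact: (linN (hLv y)).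
have rLD2 : forall x a b, rhoL x (a + b) = rhoL x a + rhoL x b by move=> x a b; exact: (linD (hLx x)).
have rLN2 : forall x a, rhoL x (- a) = - rhoL x a by move=> x a; exact: (linN (hLx x)).
have rRD1 : forall a b y, rhoR (a + b) y = rhoR a y + rhoR b y by move=> a b y; exact: (linD (hRv y)).
have rRN1 : forall a y, rhoR (- a) y = - rhoR a y by move=> a y; exact: (linN (hRv y)).
have rRD2 : forall x a b, rhoR x (a + b) = rhoR x a + rhoR x b by move=> x a b; exact: (linD (hRx x)).
have rRN2 : forall x a, rhoR x (- a) = - rhoR x a by move=> x a; exact: (linN (hRx x)).
have hT : forall i, (i < n.+1)%N -> addi (Ts i).
  by move=> i hi; split; [exact: (linD (hTs i hi)) | exact: (linN (hTs i hi))].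
by apply: main_sec.
Qed.
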